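(* Let $a^+$ denote multiplication by $x$ and $a=\frac{d}{dx}$ (so $[a,a^+]=1$), and let $W_{1,\infty}$ be the algebra of operators generated by $a^+$, $(a^+)^{-1}$ and $a$, graded by $\mathrm{weight}(a^+)=1$, $\mathrm{weight}((a^+)^{-1})=\mathrm{weight}(a)=-1$. Let $e\ge 0$ be an integer and let $$\Omega=\sum_{w}\alpha_w\, w$$ be a finite linear combination of words $w$ in the letters $a^+,(a^+)^{-1},a$, each containing exactly one occurrence of $a$ and each of weight $e$. Define the coefficients $S_\Omega(n,k)$ by the normal ordering $$\mathcal{N}(\Omega^n)=(a^+)^{ne}\sum_{k\ge 0}S_\Omega(n,k)\,(a^+)^k a^k\qquad(n\ge 0),$$ and let $U_\lambda=e^{\lambda\Omega}=\sum_{n\ge0}\frac{\lambda^n}{n!}\Omega^n$. Then for formal power series $g(x),\phi(x)$, the following are equivalent: (i) $\displaystyle\sum_{n,k\ge 0}S_\Omega(n,k)\frac{x^n}{n!}y^k=g(x)e^{y\phi(x)}$; (ii) for all $f$, $\;U_\lambda[f](x)=g(\lambda x^e)\,f\big(x(1+\phi(\lambda x^e))\big)$.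
   Context: $\mathcal{N}(\cdot)$ denotes the normally ordered form of an operator, i.e. its expression as a linear combination of terms with all powers of $a^+$ (and $(a^+)^{-1}$) to the left of all powers of $a$, obtained using $aa^+=a^+a+1$. Both sides of (ii) are understood as formal power series in $\lambda$, with $f\big(x(1+\phi(\lambda x^e))\big)$ understood via its Taylor expansion $\sum_k \frac{f^{(k)}(x)}{k!}\big(x\phi(\lambda x^e)\big)^k$. *)

(* Defs.v *)
From mathcomp Require Import all_boot all_order all_algebra.
Set Implicit Arguments. Unset Strict Implicit. Unset Printing Implicit Defensive.
Import Order.TTheory GRing.Theory Num.Theory.
Local Open Scope ring_scope.

(* Letters of words in W_{1,oo}: a^+ (mult. by x), (a^+)^{-1}, a (= d/dx). *)
Inductive letter := Ap | Apinv | Aa.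

Definition is_a (l : letter) : bool := if l is Aa then true else false.

Definition letter_weight (l : letter) : int :=
  match l with Ap => 1 | Apinv => -1 | Aa => -1 end.
Definition weight (w : seq letter) : int := \sum_(l <- w) letter_weight l.

Section Defs.
Variable K : fieldType.

(* A finite linear combination  Omega = sum alpha_w w  is a list of pairs
   (alpha_w, w); the word [:: l1; ...; lr] is the operator product l1 ... lr. *)
Definition lincomb := seq (K * seq letter).

(* A normally ordered expression: formal sum of terms c (a^+)^m a^k, m : int. *)
Definition nform := seq (K * int * nat).

(* Left multiplication of a normally ordered term by one letter, using
   a^+ a^+^m = a^+^(m+1), (a^+)^{-1} a^+^m = a^+^(m-1) and the consequence
   a (a^+)^m = (a^+)^m a + m (a^+)^(m-1) of a a^+ = a^+ a + 1 (m : int). *)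
Definition lmul_letter (l : letter) (t : nform) : nform :=
  flatten [seq let c := tm.1.1 in let m := tm.1.2 in let k := tm.2 in
               match l with
               | Ap => [:: (c, m + 1, k)]
               | Apinv => [:: (c, m - 1, k)]
               | Aa => [:: (c, m, k.+1); (c * m%:~R, m - 1, k)]
               end | tm <- t].

Definition lmul_word (w : seq letter) (t : nform) : nform :=
  foldr lmul_letter t w.

Definition lmul_lincomb (Om : lincomb) (t : nform) : nform :=
  flatten [seq [seq (aw.1 * tm.1.1, tm.1.2, tm.2) | tm <- lmul_word aw.2 t]
          | aw <- Om].

Definition nf_pow (Om : lincomb) (n : nat) : nform :=
  iter n (lmul_lincomb Om) [:: (1, 0%:Z, 0%N)].

Definition nf_coef (t : nform) (m : int) (k : nat) : K :=
  \sum_(tm <- t | (tm.1.2 == m) && (tm.2 == k)) tm.1.1.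

(* S_Omega(n,k): N(Omega^n) = (a^+)^(ne) sum_k S_Omega(n,k) (a^+)^k a^k *)
Definition S_Omega (e : nat) (Om : lincomb) (n k : nat) : K :=
  nf_coef (nf_pow Om n) (n * e + k)%N%:Z k.

(* Formal series sum_{m in Z} s m x^m (coefficient functions int -> K). *)
Definition lseries := int -> K.

Definition act_letter (l : letter) (s : lseries) : lseries :=
  match l with
  | Ap => fun m => s (m - 1)
  | Apinv => fun m => s (m + 1)
  | Aa => fun m => (m + 1)%:~R * s (m + 1)
  end.

Definition act_word (w : seq letter) (s : lseries) : lseries :=
  foldr act_letter s w.

Definition act_lincomb (Om : lincomb) (s : lseries) : lseries :=
  fun m => \sum_(aw <- Om) aw.1 * act_word aw.2 s m.

Definition fps := nat -> K.

Definition embed (f : fps) : lseries :=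
  fun m => match m with Posz n => f n | Negz _ => 0 end.

(* coefficient of lambda^n x^m in U_lambda[f](x) = sum_n lambda^n/n! Omega^n f *)
Definition U_coef (Om : lincomb) (f : fps) (n : nat) (m : int) : K :=
  (n`!%:R)^-1 * iter n (act_lincomb Om) (embed f) m.

Definition fps1 : fps := fun n => (n == 0%N)%:R.
Definition fps_mul (p q : fps) : fps :=
  fun n => \sum_(i < n.+1) p i * q (n - i)%N.
Definition fps_pow (p : fps) (k : nat) : fps := iter k (fps_mul p) fps1.
Definition fps_deriv (p : fps) : fps := fun n => n.+1%:R * p n.+1.

(* bivariate formal power series: B n m = coefficient of u^n v^m *)
Definition bfps := nat -> nat -> K.
Definition b1 : bfps := fun n m => ((n == 0%N) && (m == 0%N))%:R.
Definition bmul (A B : bfps) : bfps :=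
  fun n m => \sum_(i < n.+1) \sum_(j < m.+1) A i j * B (n - i)%N (m - j)%N.
Definition bpow (A : bfps) (k : nat) : bfps := iter k (bmul A) b1.
Definition in_fst (p : fps) : bfps := fun n m => if m == 0%N then p n else 0.
Definition in_snd (p : fps) : bfps := fun n m => if n == 0%N then p m else 0.

Definition bexp_snd (phi : fps) : bfps :=
  fun n k => (k`!%:R)^-1 * fps_pow phi k n.

(* In (ii): variables (lambda, x).  h(lambda x^e): *)
Definition subst_lxe (e : nat) (h : fps) : bfps :=
  fun n m => if m == (e * n)%N then h n else 0.
Definition bX : bfps := in_snd (fun m => (m == 1%N)%:R).

(* f(x(1 + psi)) := sum_k f^(k)(x)/k! (x psi)^k ; the k-th term is divisible
   by x^k, so the coefficient of lambda^n x^m only involves k <= m. *)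
Definition taylor_comp (f : fps) (psi : bfps) : bfps :=
  fun n m => \sum_(k < m.+1)
     bmul (in_snd (fun j => (k`!%:R)^-1 * iter k fps_deriv f j))
          (bpow (bmul bX psi) k) n m.

(* coefficient of lambda^n x^m in g(lambda x^e) f(x(1+phi(lambda x^e))) *)
Definition rhs_ii (e : nat) (g phi f : fps) : bfps :=
  bmul (subst_lxe e g) (taylor_comp f (subst_lxe e phi)).

End Defs.

(* Main.v *)
Require Import Defs.
From mathcomp Require Import all_boot all_order all_algebra.
From mathcomp Require Import zify ring.
From Stdlib Require Import FunctionalExtensionality.
Import GRing.Theory.
Set Implicit Arguments. Unset Strict Implicit. Unset Printing Implicit Defensive.
Local Open Scope ring_scope.

Definition dk (K : fieldType) (k : nat) (s : lseries K) : lseries K :=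
  iter k (act_letter Aa) s.

Definition evalt (K : fieldType) (t : nform K) (s : lseries K) : lseries K :=
  fun p => \sum_(tm <- t) tm.1.1 * dk tm.2 s (p - tm.1.2).

Lemma act_letter_ext (K : fieldType) l (s1 s2 : lseries K) :
  s1 =1 s2 -> act_letter l s1 =1 act_letter l s2.
Proof. by move=> H p; case: l => /=; rewrite H. Qed.

Lemma act_word_ext (K : fieldType) w (s1 s2 : lseries K) :
  s1 =1 s2 -> act_word w s1 =1 act_word w s2.
Proof.
elim: w => [|l w IH] H p /=; first exact: H.
by apply: act_letter_ext; apply: IH.
Qed.

Lemma act_lincomb_ext (K : fieldType) Om (s1 s2 : lseries K) :
  s1 =1 s2 -> act_lincomb Om s1 =1 act_lincomb Om s2.
Proof.
move=> H p; rewrite /act_lincomb; apply: eq_bigr => aw _.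
by rewrite (act_word_ext _ H).
Qed.

Lemma act_letter_sum (K : fieldType) (I : Type) l (r : seq I) (F : I -> lseries K) p :
  act_letter l (fun q => \sum_(x <- r) F x q) p = \sum_(x <- r) act_letter l (F x) p.
Proof. by case: l => //=; rewrite mulr_sumr. Qed.

Lemma evalt_letter (K : fieldType) l (t : nform K) s p :
  evalt (lmul_letter l t) s p = act_letter l (evalt t s) p.
Proof.
rewrite /evalt /lmul_letter big_flatten big_map act_letter_sum.
apply: eq_bigr => [[[c m] k]] _ /=.
case: l => /=.
- rewrite big_seq1 /=; congr (_ * dk _ _ _); lia.
- rewrite big_seq1 /=; congr (_ * dk _ _ _); lia.
- rewrite big_cons big_seq1 /=.
  have -> : p - (m - 1) = p - m + 1 by lia.
  have -> : p + 1 - m = p - m + 1 by lia.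
  set D := dk _ _ _.
  rewrite !intrD !intrN.
  ring.
Qed.

Lemma evalt_word (K : fieldType) w (t : nform K) s p :
  evalt (lmul_word w t) s p = act_word w (evalt t s) p.
Proof.
elim: w p => [|l w IH] p //=.
rewrite evalt_letter; apply: act_letter_ext => q; exact: IH.
Qed.

Lemma evalt_lincomb (K : fieldType) Om (t : nform K) s p :
  evalt (lmul_lincomb Om t) s p = act_lincomb Om (evalt t s) p.
Proof.
rewrite /evalt /lmul_lincomb /act_lincomb big_flatten big_map.
apply: eq_bigr => aw _; rewrite big_map -/(evalt _ _ _) /=.
rewrite -evalt_word /evalt mulr_sumr; apply: eq_bigr => tm _ /=.
by rewrite mulrA.
Qed.

Lemma evalt_pow (K : fieldType) Om n (s : lseries K) p :
  iter n (act_lincomb Om) s p = evalt (nf_pow Om n) s p.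
Proof.
elim: n p => [|n IH] p.
  by rewrite /nf_pow /= /evalt big_seq1 /= mul1r subr0.
rewrite /nf_pow /= -/(nf_pow Om n) evalt_lincomb.
by apply: act_lincomb_ext => q; rewrite IH.
Qed.

Definition homog (K : fieldType) (W : int) (tm : K * int * nat) : bool :=
  tm.1.2 == W + tm.2%:Z.

Lemma hom_letter (K : fieldType) W l (t : nform K) :
  all (homog W) t -> all (homog (W + letter_weight l)) (lmul_letter l t).
Proof.
move=> H; apply/allP => u; rewrite /lmul_letter => /flattenP [r /mapP [tm Htm ->]].
move: (allP H tm Htm); rewrite /homog => /eqP Hm.
case: l => /=; rewrite !inE.
- by move=> /eqP -> /=; apply/eqP; lia.
- by move=> /eqP -> /=; apply/eqP; lia.
- by move=> /orP [] /eqP -> /=; apply/eqP; lia.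
Qed.

Lemma weight_cons l w : weight (l :: w) = letter_weight l + weight w.
Proof. by rewrite /weight big_cons. Qed.

Lemma hom_word (K : fieldType) W w (t : nform K) :
  all (homog W) t -> all (homog (W + weight w)) (lmul_word w t).
Proof.
elim: w => [|l w IH] H /=.
  by rewrite /weight big_nil addr0.
rewrite weight_cons (_ : W + _ = (W + weight w) + letter_weight l); last by lia.
by apply: hom_letter; apply: IH.
Qed.

Lemma hom_lincomb (K : fieldType) (e : int) W (Om : lincomb K) (t : nform K) :
  all (fun aw => weight aw.2 == e) Om ->
  all (homog W) t -> all (homog (W + e)) (lmul_lincomb Om t).
Proof.
move=> HO H; elim: Om HO => [|aw Om IH] //= /andP [/eqP Ha HO].
rewrite /lmul_lincomb /= all_cat -/(lmul_lincomb Om t) IH // andbT.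
rewrite all_map; apply/allP => tm Htm /=.
have := allP (hom_word aw.2 H) tm Htm.
by rewrite Ha.
Qed.

Lemma hom_pow (K : fieldType) (e : nat) (Om : lincomb K) n :
  all (fun aw => weight aw.2 == e%:Z) Om ->
  all (homog (n * e)%N%:Z) (nf_pow Om n).
Proof.
move=> HO; elim: n => [|n IH]; first by rewrite /nf_pow /= /homog.
rewrite /nf_pow /= -/(nf_pow Om n) (_ : ((n.+1 * e)%N)%:Z = (n * e)%N%:Z + e%:Z); last by lia.
exact: hom_lincomb.
Qed.

Lemma sum_if_eq (K : fieldType) N a (X : nat -> K) :
  \sum_(j < N) (if (j : nat) == a then X (j : nat) else 0) = if (a < N)%N then X a else 0.
Proof.
case: ltnP => H.
- rewrite (bigD1 (Ordinal H)) //= eqxx big1 ?addr0 // => j Hj.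
  case: eqP => // Ha; exfalso; move/eqP: Hj; apply; exact: val_inj.
- rewrite big1 // => j _; case: eqP => // Ha.
  by have := ltn_ord j; rewrite Ha ltnNge H.
Qed.

Lemma group (K : fieldType) (t : nform K) (F : nat -> K) N :
  (forall k, (N <= k)%N -> F k = 0) ->
  \sum_(tm <- t) tm.1.1 * F tm.2 =
  \sum_(k < N) (\sum_(tm <- t | tm.2 == (k : nat)) tm.1.1) * F k.
Proof.
move=> HF; elim: t => [|tm t IH].
  by rewrite big_nil big1 // => k _; rewrite big_nil mul0r.
rewrite big_cons IH.
transitivity (\sum_(k < N) ((if (k : nat) == tm.2 then tm.1.1 * F k else 0) +
   (\sum_(x <- t | x.2 == (k : nat)) x.1.1) * F k)); last first.
  apply: eq_bigr => k _; rewrite big_cons eq_sym.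
  by case: eqP => _; rewrite ?mulrDl ?add0r.
rewrite big_split /= (sum_if_eq N tm.2 (fun k => tm.1.1 * F k)); congr (_ + _).
by case: ltnP => // H; rewrite HF // mulr0.
Qed.

Lemma dkE (K : fieldType) (s : lseries K) k q :
  dk k s q = (\prod_(i < k) ((q + (i.+1)%:Z)%:~R : K)) * s (q + k%:Z).
Proof.
elim: k q => [|k IH] q; first by rewrite big_ord0 mul1r addr0.
rewrite /dk /= -/(dk _ _ _) IH big_ord_recl /= mulrA.
rewrite (_ : q + 1 + k%:Z = q + k.+1%:Z); last by lia.
congr (_ * _ * _); apply: eq_bigr => i _; congr (_%:~R); rewrite /bump /=; lia.
Qed.

Definition FF (K : fieldType) (J k : nat) : K :=
  \prod_(i < k) ((J%:Z - k%:Z + (i.+1)%:Z)%:~R : K).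

Lemma FF0 (K : fieldType) J k : (J < k)%N -> FF K J k = 0.
Proof.
move=> H; have Hi : (k - J.+1 < k)%N by lia.
rewrite /FF (bigD1 (Ordinal Hi)) //= (_ : J%:Z - k%:Z + (k - J.+1).+1%:Z = 0).
  by rewrite mul0r.
lia.
Qed.

Lemma FFJJ (K : fieldType) J : [pchar K] =i pred0 -> FF K J J != 0.
Proof.
move=> HK; apply/prodf_neq0 => i _.
rewrite (_ : J%:Z - J%:Z + (i.+1)%:Z = (i.+1)%:Z); last by lia.
have := (pcharf0P K).1 HK i.+1.
by rewrite /= => ->.
Qed.

Lemma U_A1 (K : fieldType) (e : nat) (Om : lincomb K)
  (HO : all (fun aw => weight aw.2 == e%:Z) Om) (f : fps K) n J :
  U_coef Om f n (Posz (n*e + J)) =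
  f J * \sum_(k < J.+1) (S_Omega e Om n k / n`!%:R) * FF K J k.
Proof.
rewrite /U_coef evalt_pow /evalt.
have Hh := hom_pow n HO. set t := nf_pow Om n in Hh *.
transitivity ((n`!%:R)^-1 * (f J * \sum_(tm <- t) tm.1.1 * FF K J tm.2)).
  congr (_ * _); rewrite mulr_sumr big_seq [RHS]big_seq; apply: eq_bigr => tm Htm.
  have /eqP Hm := allP Hh tm Htm.
  rewrite dkE Hm.
  rewrite (_ : Posz (n*e+J) - (Posz (n*e) + tm.2%:Z) + tm.2%:Z = J%:Z); last by lia.
  rewrite /embed /FF.
  rewrite (_ : Posz (n*e+J) - (Posz (n*e) + tm.2%:Z) = J%:Z - tm.2%:Z); last by lia.
  by ring.
rewrite (group _ (F := FF K J) (N := J.+1)); last by move=> k Hk; apply: FF0.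
rewrite mulrCA mulr_sumr; congr (_ * _); apply: eq_bigr => k _.
rewrite /S_Omega /nf_coef -/t mulrA [_^-1 * _]mulrC; congr (_ / _ * _).
rewrite big_seq_cond [RHS]big_seq_cond; apply: eq_bigl => tm.
case Htm: (tm \in t) => //=. have /eqP Hm := allP Hh tm Htm. rewrite Hm.
by case: (tm.2 =P k) => [->|]; rewrite ?andbF // andbT PoszD eqxx.
Qed.

Lemma U_A2 (K : fieldType) (e : nat) (Om : lincomb K)
  (HO : all (fun aw => weight aw.2 == e%:Z) Om) (f : fps K) n (m : int) :
  m < Posz (n*e) -> U_coef Om f n m = 0.
Proof.
move=> H.
rewrite /U_coef evalt_pow /evalt.
have Hh := hom_pow n HO. set t := nf_pow Om n in Hh *.
rewrite big_seq big1 ?mulr0 // => tm Htm.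
have /eqP Hm := allP Hh tm Htm.
rewrite dkE Hm (_ : m - (Posz (n*e) + tm.2%:Z) + tm.2%:Z = m - Posz (n*e)); last by lia.
case E: (m - Posz (n*e)) => [z|z]; first by lia.
by rewrite /= !mulr0.
Qed.

Definition subb (K : fieldType) (e s : nat) (h : fps K) : bfps K :=
  fun n m => if m == (e * n + s)%N then h n else 0.

Lemma subst_sub (K : fieldType) e (h : fps K) : subst_lxe e h = subb e 0 h.
Proof. by apply: functional_extensionality => n; apply: functional_extensionality => m; rewrite /subst_lxe /subb addn0. Qed.

Lemma bmul_sub (K : fieldType) e s1 s2 (h1 h2 : fps K) :
  bmul (subb e s1 h1) (subb e s2 h2) = subb e (s1 + s2) (fps_mul h1 h2).
Proof.
apply: functional_extensionality => n; apply: functional_extensionality => m.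
rewrite /bmul /subb /fps_mul.
have step : forall i : 'I_n.+1,
  \sum_(j < m.+1) (if (j : nat) == (e * i + s1)%N then h1 i else 0) *
     (if (m - j)%N == (e * (n - i) + s2)%N then h2 (n - i)%N else 0)
  = if m == (e * n + (s1 + s2))%N then h1 i * h2 (n - i)%N else 0.
  move=> i.
  transitivity (\sum_(j < m.+1) (if (j : nat) == (e * i + s1)%N then
      (if (m - (e * i + s1))%N == (e * (n - i) + s2)%N then h1 i * h2 (n - i)%N else 0) else 0)).
    apply: eq_bigr => j _; case: eqP => [->|_]; last by rewrite mul0r.
    by case: ifP => _; rewrite ?mulr0.
  rewrite (sum_if_eq _ _ (fun _ => if (m - (e * i + s1))%N == (e * (n - i) + s2)%N then h1 i * h2 (n - i)%N else 0)).
  have Hi : (e * n = e * i + e * (n - i))%N by rewrite -mulnDr subnKC // -ltnS.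
  move: Hi; move: (e * n)%N (e * i)%N (e * (n - i))%N => a b c Hi.
  case: ltnP => H1; case: (eqVneq m (a + (s1 + s2))%N) => H2;
    case: (eqVneq (m - (b + s1))%N (c + s2)) => H3 //; exfalso; lia.
case: eqP => Hm.
- by apply: eq_bigr => i _; rewrite step Hm eqxx.
- by rewrite big1 // => i _; rewrite step; case: eqP.
Qed.

Lemma fps_mul1 (K : fieldType) (h : fps K) : fps_mul (fps1 K) h = h.
Proof.
apply: functional_extensionality => n.
rewrite /fps_mul big_ord_recl /fps1 /= mul1r subn0 big1 ?addr0 // => i _.
by rewrite mul0r.
Qed.

Lemma bX_sub (K : fieldType) e : bX K = subb e 1 (fps1 K).
Proof.
apply: functional_extensionality => n; apply: functional_extensionality => m.
rewrite /bX /in_snd /subb /fps1.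
case: n => [|n] /=; first by rewrite muln0 add0n; case: eqP.
by case: ifP.
Qed.

Lemma bpow_sub (K : fieldType) e (phi : fps K) k :
  bpow (subb e 1 phi) k = subb e k (fps_pow phi k).
Proof.
elim: k => [|k IH].
  apply: functional_extensionality => n; apply: functional_extensionality => m.
  rewrite /bpow /b1 /subb /fps_pow /fps1 /=.
  case: n => [|n] /=; first by rewrite muln0; case: m.
  by case: ifP.
by rewrite /bpow /= -/(bpow _ k) IH bmul_sub add1n.
Qed.

Lemma bmul_insnd_sub (K : fieldType) e s (q h : fps K) n m :
  bmul (in_snd q) (subb e s h) n m =
  if (e * n + s <= m)%N then q (m - (e * n + s))%N * h n else 0.
Proof.
rewrite /bmul big_ord_recl [X in _ + X]big1 ?addr0; last first.
  by move=> i _; apply: big1 => j _; rewrite /in_snd /= mul0r.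
rewrite /in_snd /subb /= subn0.
transitivity (\sum_(j < m.+1) (if (j : nat) == (m - (e * n + s))%N then
   (if (e * n + s <= m)%N then q (m - (e * n + s))%N * h n else 0) else 0)).
  apply: eq_bigr => j _; have Hj := ltn_ord j.
  move: Hj; move: (e * n)%N => a Hj.
  case: (eqVneq (m - j)%N (a + s)) => H1; case: (eqVneq (j : nat) (m - (a + s))%N) => H2;
    case: (leqP (a + s) m) => H3; rewrite ?mulr0 //; try (exfalso; lia).
  by rewrite H2.
rewrite (sum_if_eq _ _ (fun _ => if (e * n + s <= m)%N then q (m - (e * n + s))%N * h n else 0)).
by rewrite ltnS leq_subr.
Qed.

Lemma bexpE (K : fieldType) (g phi : fps K) n k :
  bmul (in_fst g) (bexp_snd phi) n k =
  \sum_(i < n.+1) g i * ((k`!%:R)^-1 * fps_pow phi k (n - i)%N).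
Proof.
rewrite /bmul; apply: eq_bigr => i _.
rewrite big_ord_recl big1 ?addr0 /in_fst /bexp_snd /= ?subn0 //.
by move=> j _; rewrite mul0r.
Qed.

Lemma derivE (K : fieldType) (f : fps K) k j :
  iter k (@fps_deriv K) f j = (\prod_(i < k) ((j + i.+1)%:R : K)) * f (j + k)%N.
Proof.
elim: k j => [|k IH] j; first by rewrite big_ord0 mul1r addn0.
change (iter k.+1 _ f j) with (j.+1%:R * iter k (@fps_deriv K) f j.+1).
rewrite IH big_ord_recl /= mulrA addn1.
rewrite (_ : (j.+1 + k)%N = (j + k.+1)%N); last by lia.
congr (_ * _ * _); apply: eq_bigr => i _; congr (_%:R); rewrite /bump /=; lia.
Qed.

Lemma taylorE (K : fieldType) e (phi f : fps K) n m :
  taylor_comp f (subst_lxe e phi) n m =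
  \sum_(k < m.+1) (if (e * n + k <= m)%N then
     ((k`!%:R)^-1 * iter k (@fps_deriv K) f (m - (e * n + k))%N) * fps_pow phi k n else 0).
Proof.
rewrite /taylor_comp; apply: eq_bigr => k _.
by rewrite subst_sub (bX_sub K e) bmul_sub fps_mul1 addn0 bpow_sub bmul_insnd_sub.
Qed.

Lemma rhsB (K : fieldType) e (g phi f : fps K) n m :
  rhs_ii e g phi f n m =
  if (n * e <= m)%N then
    f (m - n * e)%N * \sum_(k < (m - n * e).+1)
        bmul (in_fst g) (bexp_snd phi) n k * FF K (m - n * e) k
  else 0.
Proof.
rewrite /rhs_ii {1}/bmul.
have step : forall i : 'I_n.+1,
  \sum_(j < m.+1) subst_lxe e g i j * taylor_comp f (subst_lxe e phi) (n - i)%N (m - j)%N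
  = if (e * i < m.+1)%N then g i * taylor_comp f (subst_lxe e phi) (n - i)%N (m - e * i)%N else 0.
  move=> i; rewrite -(sum_if_eq _ _ (fun j => g i * taylor_comp f (subst_lxe e phi) (n - i)%N (m - j)%N)).
  by apply: eq_bigr => j _; rewrite /subst_lxe; case: eqP => _; rewrite ?mul0r.
under eq_bigr do rewrite step taylorE.
rewrite [(n * e)%N]mulnC.
case: leqP => Hne.
- set J := (m - e * n)%N.
  transitivity (\sum_(i < n.+1) g i * \sum_(k < J.+1)
      ((k`!%:R)^-1 * iter k (@fps_deriv K) f (J - k)%N) * fps_pow phi k (n - i)%N).
    apply: eq_bigr => i _.
    have Hi : (e * n = e * i + e * (n - i))%N by rewrite -mulnDr subnKC // -ltnS.
    have Hei : (e * i <= e * n)%N by rewrite leq_mul2l -ltnS ltn_ord orbT.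
    rewrite ifT; last by rewrite ltnS (leq_trans Hei Hne).
    congr (_ * _).
    rewrite (big_ord_widen (m - e * i)%N.+1 (fun k => ((k`!%:R)^-1 * iter k (@fps_deriv K) f (J - k)%N) * fps_pow phi k (n - i)%N)); last first.
      rewrite ltnS /J; lia.
    rewrite [RHS]big_mkcond; apply: eq_bigr => k _ /=.
    move: (nat_of_ord k) => {}k.
    rewrite /J; move: Hi Hei Hne; move: (e * n)%N (e * i)%N (e * (n - i))%N => a b c Hi Hei Hne.
    case: leqP => H1; case: ltnP => H2 //; try (exfalso; lia).
    by rewrite (_ : (m - b - (c + k) = m - a - k)%N); last lia.
  rewrite (eq_bigr (fun i : 'I_n.+1 => \sum_(k < J.+1) g i * (((k`!%:R)^-1 * iter k (@fps_deriv K) f (J - k)%N) * fps_pow phi k (n - i)%N))); last by move=> i _; rewrite mulr_sumr.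
  rewrite exchange_big /= mulr_sumr; apply: eq_bigr => k _.
  rewrite bexpE derivE subnK; last by rewrite -ltnS.
  rewrite (_ : \prod_(i < k) ((J - k)%N + i.+1)%:R = FF K J k); last first.
    rewrite /FF; apply: eq_bigr => i _.
    have Hk : (k <= J)%N by rewrite -ltnS.
    rewrite (_ : J%:Z - k%:Z + (i.+1)%:Z = (J - k + i.+1)%N%:Z); last by lia.
    by rewrite pmulrn.
  rewrite mulr_suml mulr_sumr; apply: eq_bigr => i _.
  ring.
- apply: big1 => i _; case: ifP => // Hb.
  rewrite big1 ?mulr0 // => k _.
  move: (nat_of_ord k) => {}k.
  have Hi : (e * n = e * i + e * (n - i))%N by rewrite -mulnDr subnKC // -ltnS.
  move: Hi Hne Hb; move: (e * n)%N (e * i)%N (e * (n - i))%N => a b c Hi Hne Hb.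
  by case: leqP => // H; exfalso; lia.
Qed.

Theorem mainTheorem2 (K : fieldType) (HK : [pchar K] =i pred0)
  (e : nat) (Om : lincomb K)
  (HOm : all (fun aw => (count is_a aw.2 == 1%N) && (weight aw.2 == e%:Z)) Om)
  (g phi : fps K) :
  (* (i) sum_{n,k} S_Omega(n,k) x^n/n! y^k = g(x) e^{y phi(x)} *)
  (forall n k : nat,
      S_Omega e Om n k / n`!%:R = bmul (in_fst g) (bexp_snd phi) n k)
  <->
  (* (ii) for all f, U_lambda[f](x) = g(lambda x^e) f(x(1+phi(lambda x^e))) *)
  (forall (f : fps K) (n : nat) (m : int),
      U_coef Om f n m =
      match m with Posz mm => rhs_ii e g phi f n mm | Negz _ => 0 end).
Proof.
have HO : all (fun aw => weight aw.2 == e%:Z) Om.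
  by apply: sub_all HOm => aw /andP [_ ->].
split.
- move=> Hi f n [mm|mm].
  + rewrite rhsB; case: leqP => H.
    * rewrite -{1}(subnKC H) (U_A1 HO); congr (_ * _); apply: eq_bigr => k _.
      by rewrite Hi.
    * by rewrite (U_A2 HO).
  + by rewrite (U_A2 HO) // NegzE; lia.
- move=> Hii n k; elim/ltn_ind: k => k IH.
  have := Hii (fun i => (i == k)%:R) n (Posz (n * e + k)).
  rewrite (U_A1 HO) rhsB leq_addr addKn eqxx !mul1r !big_ord_recr /=.
  rewrite (eq_bigr (fun j : 'I_k => bmul (in_fst g) (bexp_snd phi) n j * FF K k j)); last first.
    by move=> j _; rewrite IH.
  by move/addrI/(mulIf (FFJJ k HK)).
Qed.
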